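(* The group $\mathrm{GO}(S)^\circ$ acts freely on $\tau^{-1}(CZ_{r,n} \cup CZ_{r-1,n}) \subset \mathrm{Hom}(V,S)$.
   Context: Work over $\mathbb{C}$. Let $V = \mathbb{C}^n$, $r \le n$ even, $S = \mathbb{C}^r$ with a nondegenerate quadratic form $\omega_S$. $\mathrm{GO}(S)$ is the group of invertible linear $\phi: S\to S$ with $\omega_S(\phi v,\phi v) = \chi(\phi)\omega_S(v,v)$ for some $\chi(\phi)\in\mathbb{C}^*$. $\mathrm{GO}(S)$ acts on the orthogonal Grassmannian $\mathrm{OG}(r/2,S)$ of maximal isotropic subspaces, which has two connected components; $\mathrm{GO}(S)^\circ$ is the kernel of the induced homomorphism $\mathrm{GO}(S) \to \mu_2$. $\mathrm{GO}(S)$ acts on $\mathrm{Hom}(V,S)$ by $(\phi,f)\mapsto \phi\circ f$. Let $\tau: \mathrm{Hom}(V,S) \to \mathrm{Sym}^2 V^\vee$, $\tau(f)(v,w) = \omega_S(f(v),f(w))$. $CZ_{k,n} \subset \mathrm{Sym}^2 V^\vee$ is the set of quadratic forms of rank exactly $k$. *)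

(* Defs.v *)
From HB Require Import structures.
From mathcomp Require Import all_boot all_order all_algebra.
From mathcomp Require Import complex.
From mathcomp Require Import reals.
Set Implicit Arguments. Unset Strict Implicit. Unset Printing Implicit Defensive.
Import GRing.Theory Num.Theory.
Local Open Scope ring_scope.

(* The ground field is C := R[i] for R : realType (a model of
   the complex numbers).  Vectors of V = C^n and S = C^r are row vectors;
   a linear map f : V -> S is a matrix F : 'M_(n, r) acting by v |-> v *m F;
   a linear map phi : S -> S is a matrix P : 'M_r acting by v |-> v *m P,
   so that phi o f corresponds to F *m P.  A subspace of S is the row space
   of a matrix (mxalgebra). *)

Section Defs.
Variable C : fieldType.

Definition omega (r : nat) (Q : 'M[C]_r) (v w : 'rV[C]_r) : C :=
  (v *m Q *m w^T) 0 0.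

Definition nondeg_quadform (r : nat) (Q : 'M[C]_r) : Prop :=
  Q^T = Q /\ Q \in unitmx.

Definition GO (r : nat) (Q : 'M[C]_r) (P : 'M[C]_r) : Prop :=
  P \in unitmx /\
  exists chi : C, chi != 0 /\
    forall v : 'rV[C]_r, omega Q (v *m P) (v *m P) = chi * omega Q v v.

Definition max_isotropic (r : nat) (Q : 'M[C]_r) (L : 'M[C]_r) : Prop :=
  \rank L = (r %/ 2)%N /\
  forall u : 'rV[C]_r, (u <= L)%MS -> omega Q u u = 0.

(* Two maximal isotropic subspaces L, L' of a 2m-dimensional nondegenerate
   quadratic space lie in the same connected component of OG(m, S) iff
   dim (L cap L') = m (mod 2). *)
Definition same_component (r : nat) (L L' : 'M[C]_r) : Prop :=
  \rank (L :&: L')%MS = (r %/ 2)%N %[mod 2].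

(* GO(S)^o: the elements of GO(S) preserving each of the two components of
   OG(r/2, S), i.e. the kernel of GO(S) -> mu_2. *)
Definition GO0 (r : nat) (Q : 'M[C]_r) (P : 'M[C]_r) : Prop :=
  GO Q P /\
  forall L : 'M[C]_r, max_isotropic Q L -> same_component L (L *m P).

(* tau(f)(v, w) = omega(f v, f w); as a Gram matrix on V = C^n. *)
Definition tau (n r : nat) (Q : 'M[C]_r) (F : 'M[C]_(n, r)) : 'M[C]_n :=
  F *m Q *m F^T.

Definition CZ (k n : nat) (A : 'M[C]_n) : Prop :=
  A^T = A /\ \rank A = k.

Definition acts_freely_on (n r : nat) (G : 'M[C]_r -> Prop)
  (X : 'M[C]_(n, r) -> Prop) : Prop :=
  forall F P, X F -> G P -> F *m P = F -> P = 1%:M.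

End Defs.
Arguments CZ {C} k n A.

(* Main.v *)
Require Import Defs.
From HB Require Import structures.
From mathcomp Require Import all_boot all_order all_algebra.
From mathcomp Require Import complex.
From mathcomp Require Import reals.
From mathcomp Require Import ring lra zify.
From Stdlib Require Import Classical.
Import GRing.Theory Num.Theory.
Local Open Scope ring_scope.

Lemma fin_arith (a b c d m : nat) : a = m %[mod 2] ->
  (b + a)%N = (m + m)%N ->
  (b <= c)%N ->
  (c <= m + d)%N -> (d <= 1)%N -> (a < m)%N -> (0 < m)%N -> False.
Proof. lia. Qed.

Section Gen.
Variable C : numClosedFieldType.
Variable r : nat.

Lemma mx1_eq0 (A : 'M[C]_1) : A 0 0 = 0 -> A = 0.
Proof. by move=> h; apply/matrixP=> i j; rewrite !ord1 [RHS]mxE. Qed.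

Lemma mx1_eqE (A B : 'M[C]_1) : A 0 0 = B 0 0 -> A = B.
Proof. by move=> h; rewrite [A]mx11_scalar [B]mx11_scalar h. Qed.

Lemma bil_delta k (M : 'M[C]_k) i j :
  (('e_i : 'rV[C]_k) *m M *m ('e_j : 'rV[C]_k)^T) 0 0 = M i j.
Proof. by rewrite -rowE trmx_delta -colE !mxE. Qed.

Lemma two_eq0 (x : C) : x + x = 0 -> x = 0.
Proof. by move=> h; apply/eqP; move: (mulrn_eq0 x 2); rewrite mulr2n h eqxx. Qed.

Lemma two_nz : (2 : C) != 0.
Proof. by rewrite pnatr_eq0. Qed.

Lemma polar k (M : 'M[C]_k) : M^T = M ->
  (forall v : 'rV_k, v *m M *m v^T = 0) -> M = 0.
Proof.
move=> hs hv; apply/matrixP=> i j; rewrite [RHS]mxE.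
have hd l : M l l = 0 by rewrite -bil_delta hv mxE.
have := hv (('e_i : 'rV[C]_k) + 'e_j).
have hB a b : ('e_a : 'rV[C]_k) *m M *m ('e_b : 'rV[C]_k)^T = (M a b)%:M.
  by rewrite [LHS]mx11_scalar bil_delta.
rewrite linearD /= !mulmxDl !mulmxDr !hB -!raddfD /= => /matrixP/(_ 0 0).
rewrite !mxE /= mulr1n !hd add0r addr0.
have -> : M j i = M i j by move/matrixP: hs => /(_ i j); rewrite mxE.
exact: two_eq0.
Qed.

Lemma colsym (X Z : 'cV[C]_r) : X *m Z^T + Z *m X^T = 0 -> X = 0 \/ Z = 0.
Proof.
move=> h.
have he a b : X a 0 * Z b 0 + Z a 0 * X b 0 = 0.
  have := congr1 (fun A : 'M[C]_r => A a b) h; rewrite !mxE !big_ord1 !mxE => ->.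
  by [].
case: (pickP (fun i => X i 0 != 0)) => [i hi | hn]; last first.
  by left; apply/matrixP=> a b; rewrite !ord1 [RHS]mxE; move: (hn a) => /negbFE/eqP.
right; apply/matrixP=> a b; rewrite ord1 [RHS]mxE.
have hzi : Z i 0 = 0.
  have := he i i; rewrite [Z i 0 * _]mulrC => /two_eq0/eqP.
  by rewrite mulf_eq0 (negbTE hi) => /eqP.
have := he i a; rewrite hzi mul0r addr0 => /eqP.
by rewrite mulf_eq0 (negbTE hi) => /eqP.
Qed.


Variable Q : 'M[C]_r.
Hypothesis hQs : Q^T = Q.
Hypothesis hQu : Q \in unitmx.

Lemma trQ m1 m2 (A : 'M[C]_(m1, r)) (B : 'M[C]_(m2, r)) :
  (A *m Q *m B^T)^T = B *m Q *m A^T.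
Proof. by rewrite !trmx_mul trmxK hQs mulmxA. Qed.

Lemma sand p1 p2 m1 m2 (D1 : 'M[C]_(p1, m1)) (A : 'M[C]_(m1, r))
  (D2 : 'M[C]_(p2, m2)) (B : 'M[C]_(m2, r)) :
  D1 *m A *m Q *m (D2 *m B)^T = D1 *m (A *m Q *m B^T) *m D2^T.
Proof. by rewrite trmx_mul !mulmxA. Qed.

Lemma iso_sub m1 m2 (A : 'M[C]_(m1, r)) (B : 'M[C]_(m2, r)) :
  (A <= B)%MS -> B *m Q *m B^T = 0 -> A *m Q *m A^T = 0.
Proof. by case/submxP=> D -> h; rewrite sand h mulmx0 mul0mx. Qed.

Lemma rank_QT m (L : 'M[C]_(m, r)) : \rank (Q *m L^T) = \rank L.
Proof. by rewrite -mxrank_tr trmx_mul trmxK hQs mxrankMfree // row_free_unit. Qed.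

Lemma quad_expand (a b : 'rV[C]_r) (t : C) :
  ((a + t *: b) *m Q *m (a + t *: b)^T) 0 0 =
  (a *m Q *m a^T) 0 0 + t * (a *m Q *m b^T) 0 0 *+ 2 + t ^+ 2 * (b *m Q *m b^T) 0 0.
Proof.
have hba : (b *m Q *m a^T) 0 0 = (a *m Q *m b^T) 0 0.
  by rewrite -trQ mxE.
set qa := (a *m Q *m a^T) 0 0; set qab := (a *m Q *m b^T) 0 0.
set qb := (b *m Q *m b^T) 0 0.
rewrite linearD linearZ /= !mulmxDl !mulmxDr -!scalemxAl -!scalemxAr.
rewrite [a *m Q *m a^T]mx11_scalar [a *m Q *m b^T]mx11_scalar.
rewrite [b *m Q *m a^T]mx11_scalar [b *m Q *m b^T]mx11_scalar hba.
rewrite !scale_scalar_mx -!raddfD /= mxE /= mulr1n.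
by rewrite mulr2n expr2 /qa /qab /qb !addrA mulrA.
Qed.


Lemma quad_root (A B Cc : C) : A != 0 ->
  Cc + ((- B + sqrtC (B ^+ 2 - Cc * A)) / A) * B *+ 2
     + ((- B + sqrtC (B ^+ 2 - Cc * A)) / A) ^+ 2 * A = 0.
Proof.
move=> hA.
have hs := sqrtCK (B ^+ 2 - Cc * A).
set s := sqrtC _ in hs *.
have -> : Cc + (- B + s) / A * B *+ 2 + ((- B + s) / A) ^+ 2 * A
   = (Cc * A - B ^+ 2 + s ^+ 2) / A.
  by field.
rewrite hs; have -> : Cc * A - B ^+ 2 + (B ^+ 2 - Cc * A) = 0 by ring.
by rewrite mul0r.
Qed.

Lemma grow (L : 'M[C]_r) : L *m Q *m L^T = 0 -> (2 * \rank L + 2 <= r)%N ->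
  exists L' : 'M[C]_r,
    [/\ L' *m Q *m L'^T = 0, (L <= L')%MS & \rank L' = (\rank L).+1].
Proof.
move=> hiso hk.
set K := kermx (Q *m L^T).
have rK : \rank K = (r - \rank L)%N by rewrite mxrank_ker rank_QT.
have uK (u : 'rV_r) : (u <= K)%MS -> u *m Q *m L^T = 0.
  by move/sub_kermxP; rewrite mulmxA.
have : ~~ (K <= L)%MS.
  by apply/negP => /mxrankS; rewrite rK; lia.
case/row_subPn => i hai; set a := row i K in hai.
have aK : (a <= K)%MS := row_sub i K.
have : ~~ (K <= L + a)%MS.
  apply/negP => /mxrankS; rewrite rK => h.
  have h1 := leq_of_leqif (mxrank_adds_leqif L a).
  have h2 := rank_leq_row a. lia.
case/row_subPn => j hbj; set b := row j K in hbj.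
have bK : (b <= K)%MS := row_sub j K.
have [u [uK' uL uu]] : exists u : 'rV_r,
    [/\ (u <= K)%MS, ~~ (u <= L)%MS & u *m Q *m u^T = 0].
  case: (eqVneq ((b *m Q *m b^T) 0 0) 0) => [hb0 | hbn].
    exists b; split => //; last exact: mx1_eq0.
    apply/negP => hbL; move/negP: hbj; apply.
    exact: submx_trans hbL (addsmxSl L a).
  set t := (- (a *m Q *m b^T) 0 0 + sqrtC (((a *m Q *m b^T) 0 0) ^+ 2
              - (a *m Q *m a^T) 0 0 * (b *m Q *m b^T) 0 0)) / (b *m Q *m b^T) 0 0.
  exists (a + t *: b); split.
  - by apply: addmx_sub => //; apply: scalemx_sub.
  - apply/negP => hu.
    case: (eqVneq t 0) => [t0 | tn0].
      by move: hu; rewrite t0 scale0r addr0; apply/negP.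
    move/negP: hbj; apply.
    have -> : b = t^-1 *: ((a + t *: b) - a).
      by rewrite addrC addKr scalerA mulVf // scale1r.
    apply: scalemx_sub; apply: addmx_sub.
      exact: submx_trans hu (addsmxSl L a).
    by rewrite -scaleN1r; apply: scalemx_sub; exact: addsmxSr.
  - apply: mx1_eq0; rewrite quad_expand.
    by rewrite /t; apply: quad_root.
exists (L + u)%MS; split.
- have : (L + u <= L + u)%MS := submx_refl _.
  case/sub_addsmxP => [[D1 D2]] /= ->.
  have hLu : L *m Q *m u^T = 0 by rewrite -trQ uK // trmx0.
  rewrite linearD /= !mulmxDl !mulmxDr !sand hiso hLu uK // uu.
  by rewrite !mulmx0 !mul0mx !addr0.
- exact: addsmxSl.
- apply/eqP; rewrite eqn_leq; apply/andP; split.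
    have h1 := leq_of_leqif (mxrank_adds_leqif L u).
    have h2 := rank_leq_row u. lia.
  rewrite (ltn_leqif (mxrank_leqif_sup (addsmxSl L u))).
  apply/negP => h; move/negP: uL; apply.
  exact: submx_trans (addsmxSr L u) h.
Qed.


Lemma grow_to (u0 : 'rV[C]_r) : u0 *m Q *m u0^T = 0 -> u0 != 0 -> (2 <= r)%N ->
  exists L : 'M[C]_r,
    [/\ L *m Q *m L^T = 0, (u0 <= L)%MS & \rank L = (r %/ 2)%N].
Proof.
move=> hu hn hr.
have step k : (k.+1 <= r %/ 2)%N -> exists L : 'M[C]_r,
    [/\ L *m Q *m L^T = 0, (u0 <= L)%MS & \rank L = k.+1].
  elim: k => [_ | k IH hk].
    exists <<u0>>%MS; split.
    - by apply: (@iso_sub _ _ _ u0 _ hu); rewrite genmxE.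
    - by rewrite genmxE.
    - by rewrite genmxE; apply/eqP; rewrite eqn_leq rank_leq_row lt0n mxrank_eq0 hn.
  have [L [h1 h2 h3]] := IH (ltnW hk).
  have hd : (r %/ 2 * 2 <= r)%N := leq_trunc_div r 2.
  have [L' [h1' h2' h3']] := @grow L h1 (ltac:(rewrite h3; lia)).
  by exists L'; split => //; [exact: submx_trans h2 h2' | rewrite h3' h3].
have hpos : (0 < r %/ 2)%N by rewrite divn_gt0.
by have := step (r %/ 2).-1; rewrite prednK //; apply.
Qed.


Theorem main_gen (n : nat) (F : 'M[C]_(n, r)) (P : 'M[C]_r) :
  ~~ odd r ->
  (CZ r n (tau Q F) \/ CZ (r - 1)%N n (tau Q F)) -> GO0 Q P -> F *m P = F ->
  P = 1%:M.
Proof.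
move=> hr hX [[hPu [chi [hchi hchiq]]] hcomp] hFP.
have [r0 | rpos] := eqVneq r 0%N.
  by apply/matrixP => i j; move: (ltn_ord i); rewrite [X in (_ < X)%N]r0 ltn0.
have r2 : (2 <= r)%N.
  have : r != 1%N by apply/eqP => r1; move: hr; rewrite r1.
  lia.
set G := tau Q F.
have rGF : (\rank G <= \rank F)%N.
  exact: leq_trans (mxrankM_maxl _ _) (mxrankM_maxl _ _).
have rF := rank_leq_col F.
have [rFr | rFlt] := eqVneq (\rank F) r.
  have [B hB] : exists B, B *m F = 1%:M by apply/row_fullP; rewrite /row_full rFr.
  by rewrite -[P]mul1mx -hB -mulmxA hFP.
have rFl : (\rank F < r)%N by rewrite ltn_neqAle rFlt rF.
have rFe : \rank F = (r - 1)%N.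
  case: hX => [[_ h]|[_ h]]; move: h rGF; rewrite /G => ->; lia.
have rGe : \rank G = (r - 1)%N.
  case: hX => [[_ h]|[_ h]]; move: h rGF; rewrite /G => ->; lia.
have hGs : G^T = G by rewrite /G /tau trQ.
have Gn0 : G != 0 by rewrite -mxrank_eq0 rGe; lia.
have [x hx] : exists x : 'rV_n, x *m G *m x^T != 0.
  apply: NNPP => hn; move/eqP: Gn0; apply; apply: polar => // v.
  by apply: NNPP => hv; apply: hn; exists v; apply/eqP.
set w := x *m F.
have hqw : (w *m Q *m w^T) 0 0 != 0.
  apply: contra hx => /eqP h; apply/eqP; apply: mx1_eq0.
  by rewrite /G /tau -h /w trmx_mul !mulmxA.
have hwP : w *m P = w by rewrite /w -mulmxA hFP.
have chi1 : chi = 1.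
  have := hchiq w; rewrite /omega hwP => h.
  apply/eqP; rewrite -subr_eq0; apply/eqP; apply/(mulIf hqw).
  by rewrite mulrBl -h mul1r subrr mul0r.
have hPQ : P *m Q *m P^T = Q.
  apply/eqP; rewrite -subr_eq0; apply/eqP; apply: polar.
    by rewrite linearB /= trQ hQs.
  move=> v; rewrite mulmxBr mulmxBl !mulmxA.
  have -> : v *m P *m Q *m P^T *m v^T = v *m Q *m v^T.
    apply: mx1_eqE; have := hchiq v.
    by rewrite /omega chi1 mul1r trmx_mul !mulmxA.
  by rewrite subrr.
set K := kermx (Q *m F^T).
have rK : \rank K = 1%N by rewrite mxrank_ker rank_QT rFe; lia.
have hPQF : P *m (Q *m F^T) = Q *m F^T.
  by rewrite -{1}hFP trmx_mul !mulmxA hPQ.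
have DK : (P - 1%:M <= K)%MS.
  by apply/sub_kermxP; rewrite mulmxBl hPQF mul1mx subrr.
have [i hi] : exists i, row i K != 0.
  case: (pickP (fun i => row i K != 0)) => [i hi | hn]; first by exists i.
  exfalso; have : K = 0.
    by apply/row_matrixP => i; rewrite row0; move: (hn i) => /negbFE/eqP.
  by move=> K0; move: rK; rewrite K0 mxrank0.
set e := row i K.
have eK : (e <= K)%MS := row_sub i K.
have Ke : (K <= e)%MS.
  rewrite -(mxrank_leqif_sup eK).2 rK.
  by apply/eqP/anti_leq; rewrite rank_leq_row lt0n mxrank_eq0.
have [X hD] : exists X : 'cV_r, P - 1%:M = X *m e.
  by apply/submxP; exact: submx_trans DK Ke.
have hP : P = 1%:M + X *m e by rewrite -hD addrC subrK.
have heF : e *m Q *m F^T = 0.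
  by move/sub_kermxP: eK; rewrite mulmxA.
set y := Q *m e^T.
set s := (e *m Q *m e^T) 0 0.
have eQ : e *m Q = y^T by rewrite /y trmx_mul hQs trmxK.
have eQe : e *m Q *m e^T = s%:M by rewrite [LHS]mx11_scalar.
have hE : X *m y^T + y *m X^T + s *: (X *m X^T) = 0.
  have t2 : Q *m (X *m e)^T = y *m X^T by rewrite trmx_mul mulmxA.
  have t3 : X *m e *m Q = X *m y^T by rewrite -mulmxA eQ.
  have t4 : X *m e *m Q *m (X *m e)^T = s *: (X *m X^T).
    have -> : X *m e *m Q *m (X *m e)^T = X *m (e *m Q *m e^T) *m X^T.
      by rewrite trmx_mul !mulmxA.
    by rewrite eQe mul_mx_scalar scalemxAl.
  have := hPQ; rewrite hP linearD /= trmx1 !mulmxDl !mulmxDr !mul1mx !mulmx1.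
  rewrite t4 t2 t3 => h; apply: (addrI Q); rewrite addr0 -[RHS]h !addrA.
  by congr (_ + _); rewrite addrAC.
have hE' : X *m (y *+ 2 + s *: X)^T + (y *+ 2 + s *: X) *m X^T = 0.
  rewrite linearD linearZ /= raddfMn /= !mulr2n linearD /= !mulmxDr !mulmxDl.
  rewrite -scalemxAr -scalemxAl.
  move: hE; set a := X *m y^T; set b := y *m X^T; set c := s *: (X *m X^T).
  move=> hE.
  have -> : a + a + c + (b + b + c) = (a + b + c) + (a + b + c).
    by rewrite addrACA [RHS]addrACA [a + b + (a + b)]addrACA.
  by rewrite hE addr0.
have [X0 | Z0] := colsym _ _ hE'.
  by rewrite hP X0 mul0mx addr0.
have en0 : e != 0 by [].
have sn0 : s != 0.
  apply/negP => /eqP s0; move: Z0; rewrite s0 scale0r addr0 => y2.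
  have y0 : y = 0.
    by rewrite -[y]scale1r -(mulVf two_nz) -scalerA scaler_nat y2 scaler0.
  move: en0; rewrite -[e]trmxK -[e^T](mulKmx hQu) -/y y0 mulmx0 trmx0.
  by rewrite eqxx.
have hXe : X = - (2 / s) *: y.
  apply: (scalerI sn0); rewrite scalerA.
  have -> : s * - (2 / s) = - 2 by field.
  move/eqP: Z0; rewrite addrC addr_eq0 => /eqP ->.
  by rewrite scaleNr scaler_nat.
have hvX (v : 'rV_r) : v *m X = (- (2 / s) * (v *m Q *m e^T) 0 0)%:M.
  by rewrite hXe -scalemxAr /y mulmxA {1}[v *m Q *m e^T]mx11_scalar scale_scalar_mx.
have eX : e *m X = (-2)%:M.
  by rewrite hvX -/s; congr (_%:M); field.
have hPP : P *m P = 1%:M.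
  rewrite hP mulmxDl mul1mx mulmxDr mulmx1 -mulmxA (mulmxA e X e) eX.
  rewrite mul_scalar_mx -scalemxAr.
  set M := X *m e.
  by rewrite scaleNr scaler_nat mulr2n opprD !addrA addrK addrK.
have wy : w *m Q *m e^T = 0.
  have -> : w *m Q *m e^T = x *m (F *m Q *m e^T) by rewrite /w !mulmxA.
  by rewrite -(@trQ _ _ e F) heF trmx0 mulmx0.
have ew : (e *m Q *m w^T) 0 0 = 0 by rewrite -(@trQ _ _ w e) wy trmx0 mxE.
set qw := (w *m Q *m w^T) 0 0 in hqw.
set t := sqrtC (- s / qw).
set u0 := e + t *: w.
have u0e : u0 *m Q *m e^T = s%:M.
  by rewrite /u0 !mulmxDl -!scalemxAl wy scaler0 addr0 eQe.
have u0n : u0 != 0.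
  apply/eqP => h; move: u0e; rewrite h !mul0mx => /matrixP/(_ 0 0).
  by rewrite !mxE /= mulr1n => h'; move: sn0; rewrite -h' eqxx.
have hu0 : u0 *m Q *m u0^T = 0.
  apply: mx1_eq0; rewrite /u0 quad_expand ew mulr0 mul0rn addr0 -/s -/qw.
  by rewrite /t sqrtCK divfK // addrN.
have [L [hL1 hL2 hL3]] := @grow_to u0 hu0 u0n r2.
have hmax : max_isotropic Q L.
  split => // u hu; rewrite /omega (@iso_sub _ _ u L hu hL1) mxE //.
have := hcomp L hmax; rewrite /same_component.
set m := (r %/ 2)%N in hL3 *.
have rLP : \rank (L *m P) = m by rewrite mxrankMfree ?row_free_unit.
have hsc := mxrank_sum_cap L (L *m P).
have LPe : (L + L *m P <= L + e)%MS.
  rewrite addsmx_sub addsmxSl /= hP mulmxDr mulmx1 mulmxA.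
  apply: addmx_sub; first exact: addsmxSl.
  exact: submx_trans (submxMl _ _) (addsmxSr _ _).
have rLe := leq_of_leqif (mxrank_adds_leqif L e).
have re := rank_leq_row e.
have r1 := mxrankS LPe.
have hlt : (\rank (L :&: L *m P) < m)%N.
  rewrite -hL3 (ltn_leqif (mxrank_leqif_sup (capmxSl L (L *m P)))).
  apply/negP => hsub.
  have uLP : (u0 <= L *m P)%MS := submx_trans hL2 (submx_trans hsub (capmxSr _ _)).
  case/submxP: uLP => z hz.
  have u0PL : (u0 *m P <= L)%MS by rewrite hz -!mulmxA hPP mulmx1 submxMl.
  have s00 : (s%:M : 'M[C]_1) 0 0 = s by rewrite mxE eqxx mulr1n.
  have hu0P : u0 *m P = u0 + (-2) *: e.
    rewrite hP mulmxDr mulmx1 mulmxA hvX u0e s00 mul_scalar_mx.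
    by congr (_ + _ *: _); field.
  have eL : (e <= L)%MS.
    have -> : e = (-2)^-1 *: (u0 *m P - u0).
      rewrite hu0P addrC addKr scalerA mulVf ?scale1r //.
      by rewrite oppr_eq0 two_nz.
    apply: scalemx_sub; apply: addmx_sub => //.
    by rewrite -scaleN1r; apply: scalemx_sub.
  case/submxP: hL2 => z1 hz1; case/submxP: eL => z2 hz2.
  move: u0e; rewrite {1}hz1 {1}hz2 sand hL1 mulmx0 mul0mx => /matrixP/(_ 0 0).
  by rewrite s00 mxE => h'; move: sn0; rewrite -h' eqxx.
have hm : (0 < m)%N by rewrite divn_gt0.
move=> hmod; exfalso; move: hmod hsc r1 rLe re hlt hm.
move: (\rank (L :&: L *m P)) (\rank (L + L *m P)) (\rank (L + e)) (\rank e) (\rank L) (\rank (L *m P)) rLP hL3.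
clearbody m => a b c d l lp -> ->.
exact: fin_arith.
Qed.

End Gen.

Local Open Scope complex_scope.

Theorem lemma2p6 (R : realType) (n r : nat) (Q : 'M[R[i]]_r)
  (hrn : (r <= n)%N) (hr : ~~ odd r) (hQ : nondeg_quadform Q) :
  acts_freely_on (GO0 Q)
    (fun F : 'M[R[i]]_(n, r) =>
       CZ r n (tau Q F) \/ CZ (r - 1)%N n (tau Q F)).
Proof.
case: hQ => hQs hQu F P hXF hG hFP.
exact: (@main_gen _ _ Q hQs hQu n F P hr hXF hG hFP).
Qed.
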